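(* Let $d\ge 2$ and $x\ge 1$ be integers, and let $U_1,\dots,U_x\in U(d^2)$ be unitary gates. Let $R_x$ and $L_x$ be the linear maps on $W^{\otimes x}$ built from $U_1,\dots,U_x$ as defined in the context, and for $y=0,\dots,x$ set $$r_y=\mathrm{tri}^{\otimes y}\otimes \mathrm{circ}^{\otimes (x-y)},\qquad \ell_y=\mathrm{circ}^{\otimes y}\otimes \mathrm{cross}^{\otimes (x-y)}\in W^{\otimes x},$$ where the $m$-th tensor factor corresponds to the $m$-th gate. (i) If all $U_1,\dots,U_x$ are dual-unitary, then $R_x$ has at least $x+1$ (linearly independent) right eigenvectors and at least $x+1$ left eigenvectors with eigenvalue $d^2$, explicitly given by $\{r_y\}_{y=0}^{x}$, i.e. $R_x r_y=d^2 r_y$ and $r_y^{T}R_x=d^2 r_y^{T}$ for all $y=0,\dots,x$; likewise $L_x\ell_y=d^2\ell_y$ and $\ell_y^{T}L_x=d^2\ell_y^{T}$ for all $y=0,\dots,x$. (ii) If the gates $U_1,\dots,U_x$ are merely unitary (not necessarily dual-unitary), then $r_0$ and $\ell_0$ are still right eigenvectors with eigenvalue $d^2$ (i.e. $R_xr_0=d^2r_0$, $L_x\ell_0=d^2\ell_0$), and $r_x$, $\ell_x$ are still left eigenvectors with eigenvalue $d^2$ (i.e. $r_x^TR_x=d^2r_x^T$, $\ell_x^TL_x=d^2\ell_x^T$).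
   Context: Let $V=\mathbb C^d$ with orthonormal basis $\{|i\rangle\}_{i=1}^d$, and $W=V^{\otimes 8}$ with basis $|i_1,\dots,i_8\rangle$. Define the (real) vectors in $W$: $\mathrm{circ}=\sum_{i_1,\dots,i_4=1}^d|i_1,i_1,i_2,i_2,i_3,i_3,i_4,i_4\rangle$, $\mathrm{tri}=\sum_{i_1,\dots,i_4=1}^d|i_1,i_2,i_2,i_1,i_3,i_4,i_4,i_3\rangle$, $\mathrm{cross}=\sum_{i_1,\dots,i_4=1}^d|i_1,i_2,i_3,i_4,i_4,i_3,i_2,i_1\rangle$; for $v\in W$ write $v_k=\langle k|v\rangle$ for basis labels $k$, and $v^T$ for the transpose (row) vector. For $U\in U(d^2)$ acting on $V\otimes V$, define the replicated (''folded'') gate $G_U$ on $W\otimes W$ by identifying $W\otimes W\cong\bigotimes_{a=1}^{8}(V^{(a)}_{\rm left}\otimes V^{(a)}_{\rm right})$ (the $a$-th copy of $V$ in the first, resp. second, factor $W$) and setting $G_U=\bigotimes_{a=1}^8 U^{(a)}$, where $U^{(a)}=U$ for odd $a$ and $U^{(a)}=\bar U$ (entrywise complex conjugate in the given basis) for even $a$, each acting on $V^{(a)}_{\rm left}\otimes V^{(a)}_{\rm right}$. For basis labels $a,b,c,e$ of $W$ write $\langle c,e|G_U|a,b\rangle$ (first slot = left leg, second slot = right leg; $a$ = input-left, $b$ = input-right, $c$ = output-left, $e$ = output-right). Transfer matrices: for gates $U_1,\dots,U_x$ with $G_m=G_{U_m}$, define $R_x,L_x$ on $W^{\otimes x}$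 by $$\langle e_1\dots e_x|R_x|a_1\dots a_x\rangle=\sum_{k_0,\dots,k_x}\mathrm{tri}_{k_0}\Big(\prod_{m=1}^x\langle k_{m-1},e_m|G_m|a_m,k_m\rangle\Big)\mathrm{circ}_{k_x},$$ $$\langle b_1\dots b_x|L_x|c_1\dots c_x\rangle=\sum_{k_0,\dots,k_x}\mathrm{circ}_{k_0}\Big(\prod_{m=1}^x\langle c_m,k_m|G_m|k_{m-1},b_m\rangle\Big)\mathrm{cross}_{k_x},$$ all sums over basis labels of $W$. Dual-unitarity: for $U\in U(d^2)$ define $\tilde U$ by $\langle ij|\tilde U|k\ell\rangle=\langle j\ell|U|ik\rangle$; $U$ is dual-unitary if both $U$ and $\tilde U$ are unitary. *)

(* Defs.v *)
(* Scalars: an arbitrary numClosedFieldType C (e.g. the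
   complex numbers), with complex conjugation Num.conj. *)
From HB Require Import structures.
From mathcomp Require Import all_boot all_order all_algebra.
Set Implicit Arguments. Unset Strict Implicit. Unset Printing Implicit Defensive.
Import Order.TTheory GRing.Theory Num.Theory.
Local Open Scope ring_scope.

(* basis labels of W = V^{(x)8}: k = (k_1,...,k_8), stored 0-based as k 0..k 7 *)
Notation lab d := {ffun 'I_8 -> 'I_d}.
(* basis labels of W^{(x)x}: one W-label per gate *)
Notation wlab d x := {ffun 'I_x -> lab d}.

Section Defs.
Variables (C : numClosedFieldType) (d : nat).

(* index of the basis vector |i j> of V (x) V inside 'I_(d*d) *)
Definition pidx (i j : 'I_d) : 'I_(d * d) := mxvec_index i j.

Definition ent (U : 'M[C]_(d * d)) (i j k l : 'I_d) : C := U (pidx i j) (pidx k l).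

Definition adjoint (U : 'M[C]_(d * d)) : 'M[C]_(d * d) := (map_mx Num.conj U)^T.

Definition unitary_mx (U : 'M[C]_(d * d)) : Prop :=
  U *m adjoint U = 1%:M /\ adjoint U *m U = 1%:M.

(* U is dual-unitary iff U is unitary and the matrix Ut with
   <ij|Ut|kl> = <jl|U|ik> (uniquely determined, pidx being a bijection
   'I_d * 'I_d -> 'I_(d*d)) is unitary *)
Definition dual_unitary (U : 'M[C]_(d * d)) : Prop :=
  unitary_mx U /\
  exists Ut : 'M[C]_(d * d),
    (forall i j k l : 'I_d, ent Ut i j k l = ent U j l i k) /\ unitary_mx Ut.

(* coefficients of circ, tri, cross (each is a sum of distinct basis vectors
   with coefficient 1, so its k-th coefficient is an indicator).
   0-based positions. *)
Definition circ (k : lab d) : C :=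
  [&& k 0 == k 1, k 2 == k 3, k 4 == k 5 & k 6 == k 7]%:R.
Definition tri (k : lab d) : C :=
  [&& k 0 == k 3, k 1 == k 2, k 4 == k 7 & k 5 == k 6]%:R.
Definition cross (k : lab d) : C :=
  [&& k 0 == k 7, k 1 == k 6, k 2 == k 5 & k 3 == k 4]%:R.

(* <c,e|G_U|a,b> ; copy a = s+1 (1-based) is odd iff s is even *)
Definition gate (U : 'M[C]_(d * d)) (a b c e : lab d) : C :=
  \prod_(s < 8) (if ~~ odd s then ent U (c s) (e s) (a s) (b s)
                 else Num.conj (ent U (c s) (e s) (a s) (b s))).

Variable x : nat.
Variable U : 'I_x -> 'M[C]_(d * d).

(* k : {ffun 'I_x.+1 -> lab d} stores k_0 .. k_x ; for gate m (0-based,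
   i.e. gate m+1), k_{m} (0-based prev) = k (widen m), next = k (lift ord0 m) *)
Definition kprev (k : {ffun 'I_x.+1 -> lab d}) (m : 'I_x) := k (widen_ord (leqnSn x) m).
Definition knext (k : {ffun 'I_x.+1 -> lab d}) (m : 'I_x) := k (lift ord0 m).

Definition Rmat (e a : wlab d x) : C :=
  \sum_(k : {ffun 'I_x.+1 -> lab d})
    tri (k ord0) * (\prod_(m < x) gate (U m) (a m) (knext k m) (kprev k m) (e m))
    * circ (k ord_max).

Definition Lmat (b c : wlab d x) : C :=
  \sum_(k : {ffun 'I_x.+1 -> lab d})
    circ (k ord0) * (\prod_(m < x) gate (U m) (kprev k m) (b m) (c m) (knext k m))
    * cross (k ord_max).

Definition mact (M : wlab d x -> wlab d x -> C) (v : wlab d x -> C) : wlab d x -> C :=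
  fun i => \sum_j M i j * v j.
Definition ract (v : wlab d x -> C) (M : wlab d x -> wlab d x -> C) : wlab d x -> C :=
  fun j => \sum_i v i * M i j.

Definition rvec (y : nat) (a : wlab d x) : C :=
  \prod_(m < x) (if (m < y)%N then tri (a m) else circ (a m)).
Definition lvec (y : nat) (a : wlab d x) : C :=
  \prod_(m < x) (if (m < y)%N then circ (a m) else cross (a m)).

End Defs.

(* Main.v *)
Require Import Defs.
From HB Require Import structures.
From mathcomp Require Import all_boot all_order all_algebra.
From Stdlib Require Import FunctionalExtensionality.
Set Implicit Arguments. Unset Strict Implicit. Unset Printing Implicit Defensive.
Import Order.TTheory GRing.Theory Num.Theory.
Local Open Scope ring_scope.


Section Chain.
Variables (C : numClosedFieldType) (A : finType).

Definition extF n (k : {ffun 'I_n.+1 -> A}) (a : A) : {ffun 'I_n.+2 -> A} :=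
  [ffun i => if unlift ord_max i is Some j then k j else a].
Definition restrF n (k : {ffun 'I_n.+2 -> A}) : {ffun 'I_n.+1 -> A} :=
  [ffun j => k (lift ord_max j)].

Lemma extF_lift n k a (j : 'I_n.+1) : extF k a (lift ord_max j) = k j.
Proof. by rewrite /extF ffunE liftK. Qed.
Lemma extF_max n k a : @extF n k a ord_max = a.
Proof. by rewrite /extF ffunE unlift_none. Qed.

Lemma sum_split n (G : {ffun 'I_n.+2 -> A} -> C) :
  \sum_k G k = \sum_(k : {ffun 'I_n.+1 -> A}) \sum_a G (extF k a).
Proof.
rewrite pair_bigA /=.
rewrite (reindex (fun p : {ffun 'I_n.+1 -> A} * A => extF p.1 p.2)) //.
exists (fun k => (restrF k, k ord_max)).
  move=> [k a] _ /=; congr (_, _); last by rewrite extF_max.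
  by apply/ffunP => j; rewrite /restrF ffunE extF_lift.
move=> k _ /=; apply/ffunP => i; rewrite /extF ffunE.
case: unliftP => [j ->|->] //; by rewrite /restrF ffunE.
Qed.

Definition mulF (M N : A -> A -> C) i j := \sum_l M i l * N l j.

Fixpoint prodF (T : nat -> A -> A -> C) (lo n : nat) : A -> A -> C :=
  if n is n'.+1 then mulF (prodF T lo n') (T (lo + n')%N)
  else fun i j => (i == j)%:R.

Lemma mulFA M N K i j : mulF (mulF M N) K i j = mulF M (mulF N K) i j.
Proof.
rewrite /mulF.
under eq_bigr do rewrite big_distrl /=.
rewrite exchange_big /=; apply: eq_bigr => l _.
by rewrite big_distrr /=; apply: eq_bigr => m _; rewrite mulrA.
Qed.

Lemma prodF_split T lo n1 n2 i j :
  prodF T lo (n1 + n2) i j = mulF (prodF T lo n1) (prodF T (lo + n1) n2) i j.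
Proof.
elim: n2 i j => [|n2 IH] i j /=.
  rewrite addn0 /mulF (bigD1 j) //= eqxx mulr1 big1 ?addr0 // => l /negbTE.
  by rewrite eq_sym => ->; rewrite mulr0.
rewrite addnS /= -mulFA /mulF; apply: eq_bigr => l _.
by rewrite IH addnA.
Qed.

Lemma sum_delta (f : A -> C) j : \sum_i f i * (i == j)%:R = f j.
Proof.
rewrite (bigD1 j) //= eqxx mulr1 big1 ?addr0 // => l /negbTE ->.
by rewrite mulr0.
Qed.

Lemma chainE n (alpha beta : A -> C) (T : nat -> A -> A -> C) :
  \sum_(k : {ffun 'I_n.+1 -> A}) alpha (k ord0) *
     (\prod_(m < n) T m (k (widen_ord (leqnSn n) m)) (k (lift ord0 m))) * beta (k ord_max)
  = \sum_j (\sum_i alpha i * prodF T 0 n i j) * beta j.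
Proof.
elim: n beta => [|n IH] beta.
  rewrite (reindex (fun a : A => [ffun _ : 'I_1 => a])) /=; last first.
    exists (fun k => k ord0) => [a _|k _]; first by rewrite ffunE.
    apply/ffunP => i; rewrite ffunE; case: i => [[|//] ?]; congr (k _); exact: val_inj.
  apply: eq_bigr => a _; rewrite big_ord0 !ffunE mulr1 sum_delta //.
rewrite sum_split.
have H : forall (k : {ffun 'I_n.+1 -> A}) a,
    alpha (extF k a ord0) *
    (\prod_(m < n.+1) T m (extF k a (widen_ord (leqnSn n.+1) m)) (extF k a (lift ord0 m))) *
    beta (extF k a ord_max) =
    alpha (k ord0) * (\prod_(m < n) T m (k (widen_ord (leqnSn n) m)) (k (lift ord0 m))) *
    (T n (k ord_max) a * beta a).
  move=> k a; rewrite big_ord_recr /= extF_max.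
  have e0 : extF k a ord0 = k ord0.
    by rewrite -[X in extF k a X](_ : lift ord_max ord0 = _) ?extF_lift //; apply: val_inj.
  have e1 : extF k a (widen_ord (leqnSn n.+1) ord_max) = k ord_max.
    rewrite -[X in extF k a X](_ : lift ord_max ord_max = _) ?extF_lift //.
    by apply: val_inj => /=; rewrite /bump ltnn.
  have e2 : extF k a (lift ord0 ord_max) = a.
    by rewrite -[X in extF k a X](_ : ord_max = _) ?extF_max //; apply: val_inj.
  rewrite e0 e1 e2.
  have E : forall m : 'I_n, T m (extF k a (widen_ord (leqnSn n.+1) (widen_ord (leqnSn n) m)))
      (extF k a (lift ord0 (widen_ord (leqnSn n) m))) =
      T m (k (widen_ord (leqnSn n) m)) (k (lift ord0 m)).
    move=> m.
    have -> : widen_ord (leqnSn n.+1) (widen_ord (leqnSn n) m) = lift ord_max (widen_ord (leqnSn n) m).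
      by apply: val_inj => /=; rewrite /bump leqNgt (leq_trans (ltn_ord m)) //.
    have -> : lift ord0 (widen_ord (leqnSn n) m) = lift ord_max (lift ord0 m) :> 'I_n.+2.
      by apply: val_inj => /=; rewrite /bump /= leqNgt ltnS ltn_ord.
    by rewrite !extF_lift.
  rewrite (eq_bigr _ (fun m _ => E m)).
  by rewrite !mulrA.
under eq_bigr => k _ do under eq_bigr => a _ do rewrite H.
under eq_bigr do rewrite -big_distrr /=.
rewrite (IH (fun l => \sum_a T n l a * beta a)) /=.
under eq_bigr do rewrite big_distrr /=.
rewrite exchange_big /=; apply: eq_bigr => a _.
rewrite /mulF add0n big_distrl /=.
under [RHS]eq_bigr do rewrite big_distrr big_distrl /=.
rewrite exchange_big /=; apply: eq_bigr => l _; rewrite big_distrl /=.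
by apply: eq_bigr => i _; rewrite !mulrA.
Qed.

Lemma left_prop (alpha : A -> C) (T : nat -> A -> A -> C) (f : nat -> C) lo n :
  (forall m, (lo <= m < lo + n)%N -> forall q, \sum_p alpha p * T m p q = f m * alpha q) ->
  forall j, \sum_i alpha i * prodF T lo n i j = (\prod_(lo <= m < lo + n) f m) * alpha j.
Proof.
elim: n => [|n IH] H j.
  by rewrite sum_delta addn0 big_geq // mul1r.
rewrite /= /mulF.
under eq_bigr do rewrite big_distrr /=.
rewrite exchange_big /=.
under eq_bigr do (under eq_bigr do rewrite mulrA; rewrite -big_distrl /=).
have H' : forall m, (lo <= m < lo + n)%N -> forall q, \sum_p alpha p * T m p q = f m * alpha q.
  move=> m /andP [h1 h2]; apply: H; rewrite h1 /= addnS; exact: ltnW.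
under eq_bigr do rewrite (IH H').
under eq_bigr do rewrite -mulrA.
rewrite -big_distrr /= H; last by rewrite leq_addr /= addnS ltnS.
rewrite addnS big_nat_recr ?leq_addr //; by rewrite mulrA.
Qed.

Lemma right_prop (beta : A -> C) (T : nat -> A -> A -> C) (g : nat -> C) lo n :
  (forall m, (lo <= m < lo + n)%N -> forall p, \sum_q T m p q * beta q = g m * beta p) ->
  forall i, \sum_j prodF T lo n i j * beta j = (\prod_(lo <= m < lo + n) g m) * beta i.
Proof.
elim: n => [|n IH] H i.
  rewrite addn0 big_geq // mul1r (bigD1 i) //= eqxx mul1r big1 ?addr0 // => j /negbTE.
  by rewrite eq_sym => ->; rewrite mul0r.
rewrite /= /mulF.
under eq_bigr do rewrite big_distrl /=.
rewrite exchange_big /=.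
under eq_bigr do (under eq_bigr do rewrite -mulrA; rewrite -big_distrr /= H;
   [|by rewrite leq_addr /= addnS ltnS]).
under eq_bigr do rewrite mulrCA.
rewrite -big_distrr /= IH.
  by rewrite addnS big_nat_recr ?leq_addr //= mulrA [_ * g _]mulrC.
move=> m /andP [h1 h2]; apply: H; rewrite h1 /= addnS; exact: ltnW.
Qed.

Lemma master n y (alpha beta : A -> C) (T : nat -> A -> A -> C) (f g : nat -> C) :
  (y <= n)%N ->
  (forall m, (m < y)%N -> forall q, \sum_p alpha p * T m p q = f m * alpha q) ->
  (forall m, (y <= m < n)%N -> forall p, \sum_q T m p q * beta q = g m * beta p) ->
  \sum_(k : {ffun 'I_n.+1 -> A}) alpha (k ord0) *
     (\prod_(m < n) T m (k (widen_ord (leqnSn n) m)) (k (lift ord0 m))) * beta (k ord_max)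
  = (\prod_(0 <= m < y) f m) * (\prod_(y <= m < n) g m) * \sum_l alpha l * beta l.
Proof.
move=> yn Hl Hr; rewrite chainE.
have Hl' : forall m, (0 <= m < 0 + y)%N -> forall q, \sum_p alpha p * T m p q = f m * alpha q.
  by move=> m /andP [_ h]; apply: Hl.
have Hr' : forall m, (y <= m < y + (n - y))%N -> forall p, \sum_q T m p q * beta q = g m * beta p.
  by move=> m; rewrite subnKC //; apply: Hr.
have E := right_prop Hr'.
rewrite subnKC // in E.
have S : forall i j, prodF T 0 n i j = mulF (prodF T 0 y) (prodF T y (n - y)) i j.
  by move=> i j; rewrite -prodF_split subnKC.
transitivity (\sum_l (\sum_i alpha i * prodF T 0 y i l) * (\sum_j prodF T y (n - y) l j * beta j)).
  under eq_bigr => j _.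
    rewrite (eq_bigr (fun i => \sum_l alpha i * prodF T 0 y i l * prodF T y (n - y) l j)); last first.
      by move=> i _; rewrite S /mulF big_distrr /=; apply: eq_bigr => l _; rewrite mulrA.
    rewrite exchange_big /= big_distrl /=.
    over.
  rewrite exchange_big /=; apply: eq_bigr => l _.
  rewrite big_distrr /=; apply: eq_bigr => j _.
  by rewrite -big_distrl /= -!mulrA big_distrl.
have L := left_prop Hl'.
rewrite (eq_bigr (fun l => ((\prod_(0 <= m < y) f m) * alpha l) * ((\prod_(y <= m < n) g m) * beta l))); last first.
  by move=> l _; rewrite L E.
rewrite big_distrr /=; apply: eq_bigr => l _.
rewrite !mulrA; congr (_ * _); rewrite -!mulrA; congr (_ * _); by rewrite mulrC.
Qed.

End Chain.


Definition o8 (i : nat) : 'I_8 := inord i.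
Lemma o8_0 : (0 : 'I_8) = o8 0. Proof. by apply: val_inj => /=; rewrite inordK. Qed.
Lemma o8_1 : (1 : 'I_8) = o8 1. Proof. by apply: val_inj => /=; rewrite inordK. Qed.
Lemma o8_n n : (n < 8)%N -> (n%:R : 'I_8) = o8 n.
Proof. by move=> h; apply: val_inj => /=; rewrite Zp_nat inordK //= modn_small. Qed.

Section Pat.
Variables (C : numClosedFieldType) (d : nat).

Lemma circE (k : lab d) : circ C k =
  [&& k (o8 0) == k (o8 1), k (o8 2) == k (o8 3), k (o8 4) == k (o8 5) & k (o8 6) == k (o8 7)]%:R.
Proof. by rewrite /circ !o8_n // o8_0 o8_1. Qed.
Lemma triE (k : lab d) : tri C k =
  [&& k (o8 0) == k (o8 3), k (o8 2) == k (o8 1), k (o8 4) == k (o8 7) & k (o8 6) == k (o8 5)]%:R.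
Proof. by rewrite /tri !o8_n // o8_0 o8_1 [k (o8 1) == _]eq_sym [k (o8 5) == _]eq_sym. Qed.
Lemma crossE (k : lab d) : cross C k =
  [&& k (o8 0) == k (o8 7), k (o8 6) == k (o8 1), k (o8 2) == k (o8 5) & k (o8 4) == k (o8 3)]%:R.
Proof. by rewrite /cross !o8_n // o8_0 o8_1 [k (o8 1) == _]eq_sym [k (o8 3) == _]eq_sym. Qed.

Record pattern (P : lab d -> C) (pi : 'I_8 -> 'I_4) (e o : 'I_4 -> 'I_8) : Prop := Pattern {
  hP : forall u, P u = [forall j, u (e j) == u (o j)]%:R;
  hpe : forall j, pi (e j) = j;
  hpo : forall j, pi (o j) = j;
  hcov : forall s, e (pi s) = s \/ o (pi s) = s;
  he : forall j, ~~ odd (e j);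
  ho : forall j, odd (o j) }.

Lemma prod_nat_forall (I : finType) (b : I -> bool) :
  \prod_j (b j)%:R = ([forall j, b j]%:R : C).
Proof.
case: (boolP [forall j, b j]) => [/forallP H | /forallPn [j /negbTE Hj]].
  by rewrite big1 // => j _; rewrite H.
by rewrite (bigD1 j) //= Hj mul0r.
Qed.


Definition pi_of (l : seq nat) (s : 'I_8) : 'I_4 := inord (nth 0%N l s).
Definition e_of (l : seq nat) (j : 'I_4) : 'I_8 := o8 (nth 0%N l j).

Ltac enum4 := let j := fresh "j" in move=> j; rewrite -[j]inord_val; case: j => [[|[|[|[|//]]]] ?] /=.
Ltac enum8 := let j := fresh "j" in move=> j; rewrite -[j]inord_val; case: j => [[|[|[|[|[|[|[|[|//]]]]]]]] ?] /=.
Ltac simp := rewrite /pi_of /e_of /o8 ?inordK //=.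

Ltac pat_tac PE :=
  split;
  [ move=> u; rewrite PE; congr (nat_of_bool _)%:R; apply/and4P/forallP;
    [ case=> h0 h1 h2 h3; enum4; simp
    | let H := fresh "H" in move=> H; split;
      [ move: (H (inord 0)) | move: (H (inord 1)) | move: (H (inord 2)) | move: (H (inord 3)) ];
      simp ]
  | enum4; simp
  | enum4; simp
  | enum8; simp; by [left | right]
  | enum4; simp
  | enum4; simp ].

Lemma circ_pat : pattern (@circ C d) (pi_of [:: 0;0;1;1;2;2;3;3]%N)
  (e_of [:: 0;2;4;6]%N) (e_of [:: 1;3;5;7]%N).
Proof. pat_tac circE. Qed.

Lemma tri_pat : pattern (@tri C d) (pi_of [:: 0;1;1;0;2;3;3;2]%N)
  (e_of [:: 0;2;4;6]%N) (e_of [:: 3;1;7;5]%N).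
Proof. pat_tac triE. Qed.

Lemma cross_pat : pattern (@cross C d) (pi_of [:: 0;1;2;3;3;2;1;0]%N)
  (e_of [:: 0;6;2;4]%N) (e_of [:: 7;1;5;3]%N).
Proof. pat_tac crossE. Qed.

Section WithPat.
Variables (P : lab d -> C) (pi : 'I_8 -> 'I_4) (e o : 'I_4 -> 'I_8).
Hypothesis pat : pattern P pi e o.

Definition expd (t : {ffun 'I_4 -> 'I_d}) : lab d := [ffun s => t (pi s)].
Definition restd (u : lab d) : {ffun 'I_4 -> 'I_d} := [ffun j => u (e j)].

Lemma pat_reindex (G : lab d -> C) :
  \sum_u P u * G u = \sum_(t : {ffun 'I_4 -> 'I_d}) G (expd t).
Proof.
case: pat => hP hpe hpo hcov he ho.
rewrite (eq_bigr (fun (u : lab d) => if [forall j, u (e j) == u (o j)] then G u else 0)); last first.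
  by move=> u _; rewrite hP; case: ifP => _; rewrite ?mul1r ?mul0r.
rewrite -big_mkcond /=.
rewrite (reindex_onto expd restd) /=; last first.
  move=> u /forallP H; apply/ffunP => s; rewrite /expd /restd !ffunE.
  case: (hcov s) => [-> //|E]; rewrite -{2}E; exact/eqP/H.
apply: eq_bigl => t; apply/andP; split.
  by apply/forallP => j; rewrite /expd !ffunE hpe hpo.
by apply/eqP/ffunP => j; rewrite /expd /restd !ffunE hpe.
Qed.

Lemma pat_prod (G : 'I_8 -> C) : \prod_s G s = \prod_j (G (e j) * G (o j)).
Proof.
case: pat => hP hpe hpo hcov he ho.
have neq : forall j, (e j == o j) = false.
  move=> j; apply/negbTE/negP => /eqP E; have := ho j; by rewrite -E (negbTE (he j)).
rewrite (reindex (fun p : bool * 'I_4 => if p.1 then o p.2 else e p.2)) /=; last first.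
  exists (fun s => (e (pi s) != s, pi s)).
    case=> [[] j] _ /=; first by rewrite hpo neq.
    by rewrite hpe eqxx.
  move=> s _ /=; case: eqP => //= ne; by case: (hcov s) => [/ne []|].
rewrite -(pair_bigA _ (fun (b : bool) j => G (if b then o j else e j))) /= big_bool /= mulrC -big_split /=.
done.
Qed.

Lemma pat_contract (H : 'I_d -> 'I_d -> 'I_d -> 'I_d -> C) (y z : lab d) :
  (forall y1 z1 y2 z2, \sum_a \sum_b H a b y1 z1 * Num.conj (H a b y2 z2) = ((y1 == y2) && (z1 == z2))%:R) ->
  \sum_u \sum_v P u * P v *
    \prod_(s < 8) (if ~~ odd s then H (u s) (v s) (y s) (z s) else Num.conj (H (u s) (v s) (y s) (z s)))
  = P y * P z.
Proof.
move=> hH.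
have pat' := pat; case: pat' => hP hpe hpo hcov he ho.
set Phi := fun (s : 'I_8) (a b : 'I_d) =>
  if ~~ odd s then H a b (y s) (z s) else Num.conj (H a b (y s) (z s)).
pose Pi := fun u v : lab d => \prod_(s < 8) Phi s (u s) (v s).
transitivity (\sum_u P u * \sum_(t : {ffun 'I_4 -> 'I_d}) Pi u (expd t)).
  apply: eq_bigr => u _; rewrite -(pat_reindex (Pi u)) big_distrr /=.
  by apply: eq_bigr => v _; rewrite mulrA.
rewrite (pat_reindex (fun u => \sum_(t : {ffun 'I_4 -> 'I_d}) Pi u (expd t))).
pose K := fun j a b => Phi (e j) a b * Phi (o j) a b.
transitivity (\prod_(j < 4) \sum_a \sum_b K j a b).
  rewrite bigA_distr_bigA /=; apply: eq_bigr => t _.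
  rewrite bigA_distr_bigA /=; apply: eq_bigr => t' _.
  rewrite /Pi pat_prod /expd; apply: eq_bigr => j _.
  by rewrite /K !ffunE hpe hpo.
transitivity (\prod_(j < 4) (((y (e j) == y (o j)) && (z (e j) == z (o j)))%:R : C)).
  apply: eq_bigr => j _; rewrite -hH; apply: eq_bigr => a _; apply: eq_bigr => b _.
  by rewrite /K /Phi (negbTE (he j)) ho.
under eq_bigr do rewrite -mulnb natrM.
by rewrite big_split /= !prod_nat_forall !hP.
Qed.

End WithPat.
End Pat.

Section Uni.
Variables (C : numClosedFieldType) (d : nat).

Lemma sum_pidx (F : 'I_(d * d) -> C) : \sum_k F k = \sum_i \sum_j F (pidx i j).
Proof.
rewrite pair_bigA /=.
rewrite (reindex (fun p : 'I_d * 'I_d => pidx p.1 p.2)) //=.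
exists (fun k : 'I_(d * d) => enum_val (cast_ord (esym (mxvec_cast d d)) k) : 'I_d * 'I_d).
  by case=> i j _; rewrite /pidx /mxvec_index cast_ordK enum_rankK.
by move=> k _ /=; rewrite /pidx /mxvec_index -surjective_pairing enum_valK cast_ordKV.
Qed.

Lemma pidx_eq (i j k l : 'I_d) : (pidx i j == pidx k l) = ((i == k) && (j == l)).
Proof. by rewrite /pidx /mxvec_index (inj_eq (@cast_ord_inj _ _ _)) (inj_eq enum_rank_inj). Qed.

Lemma uniL (M : 'M[C]_(d * d)) : M *m adjoint M = 1%:M ->
  forall y1 z1 y2 z2, \sum_a \sum_b ent M y1 z1 a b * Num.conj (ent M y2 z2 a b)
   = ((y1 == y2) && (z1 == z2))%:R.
Proof.
move=> hM y1 z1 y2 z2.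
have := congr1 (fun A : 'M[C]_(d * d) => A (pidx y1 z1) (pidx y2 z2)) hM.
rewrite /= !mxE pidx_eq => <-.
rewrite sum_pidx; apply: eq_bigr => a _; apply: eq_bigr => b _.
by rewrite /adjoint !mxE.
Qed.

Lemma uniR (M : 'M[C]_(d * d)) : adjoint M *m M = 1%:M ->
  forall y1 z1 y2 z2, \sum_a \sum_b ent M a b y1 z1 * Num.conj (ent M a b y2 z2)
   = ((y1 == y2) && (z1 == z2))%:R.
Proof.
move=> hM y1 z1 y2 z2.
have := congr1 (fun A : 'M[C]_(d * d) => A (pidx y2 z2) (pidx y1 z1)) hM.
rewrite /= !mxE pidx_eq [y2 == _]eq_sym [z2 == _]eq_sym => <-.
rewrite sum_pidx; apply: eq_bigr => a _; apply: eq_bigr => b _.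
by rewrite /adjoint !mxE mulrC.
Qed.

Definition hmap (cls : pred nat) (p : 'I_d * 'I_d) : lab d := [ffun s : 'I_8 => if cls s then p.1 else p.2].

Lemma count2 (cls : pred nat) r1 r2 (b : lab d -> bool) :
  cls r1 -> ~~ cls r2 -> (r1 < 8)%N -> (r2 < 8)%N ->
  (forall k, b k -> forall s : 'I_8, k s = if cls s then k (o8 r1) else k (o8 r2)) ->
  (forall p, b (hmap cls p)) ->
  \sum_k ((b k)%:R : C) = (d * d)%:R.
Proof.
move=> c1 c2 l1 l2 h1 h2.
rewrite (eq_bigr (fun k => if b k then 1 else 0)); last by move=> k _; case: (b k).
rewrite -big_mkcond /=.
rewrite (reindex_onto (hmap cls) (fun k : lab d => (k (o8 r1), k (o8 r2)))) /=; last first.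
  move=> k bk; apply/ffunP => s; rewrite /hmap ffunE /=; by rewrite -h1.
rewrite (eq_bigl xpredT); last first.
  case=> i j; by rewrite h2 /= /hmap !ffunE /o8 !inordK // (negbTE c2) c1 eqxx.
by rewrite -[LHS]/(\sum_(p in predT) 1) sumr_const cardT -cardE card_prod !card_ord.
Qed.

Ltac cnt_tac cls r1 r2 :=
  apply: (@count2 cls r1 r2); [by [] | by [] | by [] | by [] | | ];
  [ move=> k;
    case/andP => /and4P [/eqP ? /eqP ? /eqP ? /eqP ?] /and4P [/eqP ? /eqP ? /eqP ? /eqP ?];
    let s := fresh "s" in move=> s; rewrite -[s]inord_val;
    case: s => [[|[|[|[|[|[|[|[|//]]]]]]]] ?] /=; rewrite ?inordK //=; unfold o8 in *; congruence
  | move=> p; by rewrite /hmap !ffunE /o8 !inordK //= !eqxx ].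

Lemma sum_tri_circ : \sum_k @tri C d k * @circ C d k = (d * d)%:R.
Proof.
under eq_bigr do rewrite triE circE -natrM mulnb.
cnt_tac (fun n : nat => n < 4)%N 0%N 4%N.
Qed.
Lemma sum_circ_cross : \sum_k @circ C d k * @cross C d k = (d * d)%:R.
Proof.
under eq_bigr do rewrite circE crossE -natrM mulnb.
cnt_tac (fun n : nat => (n < 2) || (5 < n))%N 0%N 2%N.
Qed.


End Uni.


Section Rules.
Variables (C : numClosedFieldType) (d : nat).
Variables (P : lab d -> C) (pi : 'I_8 -> 'I_4) (e o : 'I_4 -> 'I_8).
Hypothesis pat : pattern P pi e o.

Lemma CAB (U : 'M[C]_(d * d)) : U *m adjoint U = 1%:M -> forall y z,
  \sum_u \sum_v P u * P v * gate U u v y z = P y * P z.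
Proof. move=> hU y z; exact: (pat_contract pat (H := fun a b y z => ent U y z a b) _ _ (uniL hU)). Qed.

Lemma CCE (U : 'M[C]_(d * d)) : adjoint U *m U = 1%:M -> forall y z,
  \sum_u \sum_v P u * P v * gate U y z u v = P y * P z.
Proof. move=> hU y z; exact: (pat_contract pat (H := fun a b y z => ent U a b y z) _ _ (uniR hU)). Qed.

Lemma CAC (U : 'M[C]_(d * d)) : dual_unitary U -> forall y z,
  \sum_u \sum_v P u * P v * gate U u y v z = P y * P z.
Proof.
case=> _ [Ut [hUt [_ hUt2]]] y z.
rewrite -(pat_contract pat (H := fun a b y z => ent Ut a b y z) _ _ (uniR hUt2)).
apply: eq_bigr => u _; apply: eq_bigr => v _; congr (_ * _).
by apply: eq_bigr => s _; rewrite hUt.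
Qed.

Lemma CBE (U : 'M[C]_(d * d)) : dual_unitary U -> forall y z,
  \sum_u \sum_v P u * P v * gate U y u z v = P y * P z.
Proof.
case=> _ [Ut [hUt [hUt2 _]]] y z.
rewrite -(pat_contract pat (H := fun a b y z => ent Ut y z a b) _ _ (uniL hUt2)).
apply: eq_bigr => u _; apply: eq_bigr => v _; congr (_ * _).
by apply: eq_bigr => s _; rewrite hUt.
Qed.

Lemma ML1 (F : lab d -> lab d -> C) :
  \sum_p P p * (\sum_g P g * F g p) = \sum_p \sum_g P p * P g * F g p.
Proof. apply: eq_bigr => p _; rewrite big_distrr /=; apply: eq_bigr => g _; by rewrite mulrA. Qed.
Lemma ML2 (F : lab d -> lab d -> C) :
  \sum_p P p * (\sum_g P g * F g p) = \sum_g \sum_p P g * P p * F g p.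
Proof. rewrite ML1 exchange_big /=; apply: eq_bigr => g _; apply: eq_bigr => p _; by rewrite [P p * _]mulrC. Qed.
Lemma MR1 (F : lab d -> lab d -> C) :
  \sum_q (\sum_g P g * F g q) * P q = \sum_q \sum_g P q * P g * F g q.
Proof. apply: eq_bigr => q _; rewrite big_distrl /=; apply: eq_bigr => g _; by rewrite mulrC mulrA. Qed.
Lemma MR2 (F : lab d -> lab d -> C) :
  \sum_q (\sum_g P g * F g q) * P q = \sum_g \sum_q P g * P q * F g q.
Proof. rewrite MR1 exchange_big /=; apply: eq_bigr => g _; apply: eq_bigr => p _; by rewrite [P p * _]mulrC. Qed.
End Rules.

Section Rules8.
Variables (C : numClosedFieldType) (d : nat) (U : 'M[C]_(d * d)).
Local Notation tri := (@tri C d).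
Local Notation circ := (@circ C d).
Local Notation cross := (@cross C d).

Lemma RRl (hD : dual_unitary U) em q :
  \sum_p tri p * (\sum_g tri g * gate U g q p em) = tri em * tri q.
Proof. by rewrite (ML2 tri) (CAC (tri_pat C d) hD) mulrC. Qed.
Lemma RRr (hU : U *m adjoint U = 1%:M) em p :
  \sum_q (\sum_g circ g * gate U g q p em) * circ q = circ em * circ p.
Proof. by rewrite (MR2 circ) (CAB (circ_pat C d) hU) mulrC. Qed.
Lemma RLl (hU : adjoint U *m U = 1%:M) am q :
  \sum_p tri p * (\sum_g tri g * gate U am q p g) = tri am * tri q.
Proof. by rewrite (ML1 tri) (CCE (tri_pat C d) hU). Qed.
Lemma RLr (hD : dual_unitary U) am p :
  \sum_q (\sum_g circ g * gate U am q p g) * circ q = circ am * circ p.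
Proof. by rewrite (MR1 circ) (CBE (circ_pat C d) hD). Qed.
Lemma LRl (hD : dual_unitary U) bm q :
  \sum_p circ p * (\sum_g circ g * gate U p bm g q) = circ bm * circ q.
Proof. by rewrite (ML1 circ) (CAC (circ_pat C d) hD). Qed.
Lemma LRr (hU : adjoint U *m U = 1%:M) bm p :
  \sum_q (\sum_g cross g * gate U p bm g q) * cross q = cross bm * cross p.
Proof. by rewrite (MR2 cross) (CCE (cross_pat C d) hU) mulrC. Qed.
Lemma LLl (hU : U *m adjoint U = 1%:M) cm q :
  \sum_p circ p * (\sum_g circ g * gate U p g cm q) = circ cm * circ q.
Proof. by rewrite (ML1 circ) (CAB (circ_pat C d) hU). Qed.
Lemma LLr (hD : dual_unitary U) cm p :
  \sum_q (\sum_g cross g * gate U p g cm q) * cross q = cross cm * cross p.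
Proof. by rewrite (MR2 cross) (CBE (cross_pat C d) hD) mulrC. Qed.
End Rules8.


Section Assemble.
Variables (C : numClosedFieldType) (d x : nat).

Lemma MASS (alpha beta : lab d -> C) (V : nat -> lab d -> C) (G : nat -> lab d -> lab d -> lab d -> C) :
  \sum_(a : wlab d x) (\sum_(k : {ffun 'I_x.+1 -> lab d}) alpha (k ord0) *
      (\prod_(m < x) G m (a m) (k (widen_ord (leqnSn x) m)) (k (lift ord0 m))) * beta (k ord_max))
    * (\prod_(m < x) V m (a m))
  = \sum_(k : {ffun 'I_x.+1 -> lab d}) alpha (k ord0) *
      (\prod_(m < x) (fun m p q => \sum_g V m g * G m g p q) m (k (widen_ord (leqnSn x) m)) (k (lift ord0 m)))
      * beta (k ord_max).
Proof.
under eq_bigr do rewrite big_distrl /=.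
rewrite exchange_big /=; apply: eq_bigr => k _.
rewrite bigA_distr_bigA /= big_distrr big_distrl /=; apply: eq_bigr => a _.
rewrite big_split /= [_ * \prod_(m < x) V m (a m)]mulrC.
by rewrite -!mulrA mulrCA.
Qed.

Lemma assemble (alpha beta : lab d -> C) (V : nat -> lab d -> C)
  (G : nat -> lab d -> lab d -> lab d -> C) (y : nat) (f g : nat -> C) :
  (y <= x)%N ->
  (forall m, (m < y)%N -> forall q, \sum_p alpha p * (\sum_h V m h * G m h p q) = f m * alpha q) ->
  (forall m, (y <= m < x)%N -> forall p, \sum_q (\sum_h V m h * G m h p q) * beta q = g m * beta p) ->
  \sum_(a : wlab d x) (\sum_(k : {ffun 'I_x.+1 -> lab d}) alpha (k ord0) *
      (\prod_(m < x) G m (a m) (k (widen_ord (leqnSn x) m)) (k (lift ord0 m))) * beta (k ord_max))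
    * (\prod_(m < x) V m (a m))
  = (\prod_(0 <= m < y) f m) * (\prod_(y <= m < x) g m) * \sum_l alpha l * beta l.
Proof.
move=> yx hl hr; rewrite MASS.
exact: (master (T := fun m p q => \sum_h V m h * G m h p q)).
Qed.

Lemma prod_if (y : nat) (F1 F2 : nat -> C) : (y <= x)%N ->
  \prod_(m < x) (if (m < y)%N then F1 m else F2 m)
  = (\prod_(0 <= m < y) F1 m) * (\prod_(y <= m < x) F2 m).
Proof.
move=> yx; rewrite -(big_mkord xpredT (fun m => if (m < y)%N then F1 m else F2 m)).
rewrite (big_cat_nat (n := y)) //= /=; congr (_ * _).
  by apply: eq_big_nat => m /andP [_ ->].
by apply: eq_big_nat => m /andP [h _]; rewrite ltnNge h.
Qed.

End Assemble.


Section Eig.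
Variables (C : numClosedFieldType) (d x : nat) (U : 'I_x.+1 -> 'M[C]_(d * d)).
Hypothesis hu : forall m, unitary_mx (U m).

Lemma rvecE y (a : wlab d x.+1) : (y <= x.+1)%N -> @rvec C d x.+1 y a =
  (\prod_(0 <= m < y) tri C (a (inord m))) * (\prod_(y <= m < x.+1) circ C (a (inord m))).
Proof.
move=> hy; rewrite /rvec -(@prod_if C x.+1 y (fun m => tri C (a (inord m))) (fun m => circ C (a (inord m)))) //.
by apply: eq_bigr => m _; rewrite inord_val.
Qed.

Lemma lvecE y (a : wlab d x.+1) : (y <= x.+1)%N -> @lvec C d x.+1 y a =
  (\prod_(0 <= m < y) circ C (a (inord m))) * (\prod_(y <= m < x.+1) cross C (a (inord m))).
Proof.
move=> hy; rewrite /lvec -(@prod_if C x.+1 y (fun m => circ C (a (inord m))) (fun m => cross C (a (inord m)))) //.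
by apply: eq_bigr => m _; rewrite inord_val.
Qed.

Lemma eigRR y : (y <= x.+1)%N -> (forall m : 'I_x.+1, (m < y)%N -> dual_unitary (U m)) ->
  mact (Rmat U) (@rvec C d x.+1 y) = (fun a => (d ^ 2)%:R * @rvec C d x.+1 y a).
Proof.
move=> hy hd; apply: functional_extensionality => e; rewrite /mact.
pose V := fun n (h : lab d) => if (n < y)%N then tri C h else circ C h.
pose G := fun n (h p q : lab d) => gate (U (inord n)) h q p (e (inord n)).
transitivity (\sum_(a : wlab d x.+1) (\sum_(k : {ffun 'I_x.+2 -> lab d}) tri C (k ord0) *
      (\prod_(m < x.+1) G m (a m) (k (widen_ord (leqnSn x.+1) m)) (k (lift ord0 m))) * circ C (k ord_max))
    * (\prod_(m < x.+1) V m (a m))).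
  apply: eq_bigr => a _; rewrite /Rmat /rvec; congr (_ * _).
  apply: eq_bigr => k _; congr (_ * _ * _); apply: eq_bigr => m _.
  by rewrite /G /kprev /knext inord_val.
rewrite (assemble (y := y) (f := fun n => tri C (e (inord n))) (g := fun n => circ C (e (inord n)))) //.
- by rewrite sum_tri_circ rvecE // mulrC -mulnn.
- move=> m hm q; rewrite /V hm /G; apply: RRl; apply: hd.
  by rewrite inordK // (leq_trans hm hy).
- move=> m /andP [h1 h2] p; rewrite /V ltnNge h1 /G; apply: RRr.
  by case: (hu (inord m)).
Qed.

Lemma eigRL y : (y <= x.+1)%N -> (forall m : 'I_x.+1, (y <= m)%N -> dual_unitary (U m)) ->
  ract (@rvec C d x.+1 y) (Rmat U) = (fun a => (d ^ 2)%:R * @rvec C d x.+1 y a).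
Proof.
move=> hy hd; apply: functional_extensionality => a; rewrite /ract.
pose V := fun n (h : lab d) => if (n < y)%N then tri C h else circ C h.
pose G := fun n (h p q : lab d) => gate (U (inord n)) (a (inord n)) q p h.
transitivity (\sum_(e : wlab d x.+1) (\sum_(k : {ffun 'I_x.+2 -> lab d}) tri C (k ord0) *
      (\prod_(m < x.+1) G m (e m) (k (widen_ord (leqnSn x.+1) m)) (k (lift ord0 m))) * circ C (k ord_max))
    * (\prod_(m < x.+1) V m (e m))).
  apply: eq_bigr => e _; rewrite /Rmat /rvec mulrC; congr (_ * _).
  apply: eq_bigr => k _; congr (_ * _ * _); apply: eq_bigr => m _.
  by rewrite /G /kprev /knext inord_val.
rewrite (assemble (y := y) (f := fun n => tri C (a (inord n))) (g := fun n => circ C (a (inord n)))) //.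
- by rewrite sum_tri_circ rvecE // mulrC -mulnn.
- move=> m hm q; rewrite /V hm /G; apply: RLl.
  by case: (hu (inord m)).
- move=> m /andP [h1 h2] p; rewrite /V ltnNge h1 /G; apply: RLr; apply: hd.
  by rewrite inordK.
Qed.

Lemma eigLR y : (y <= x.+1)%N -> (forall m : 'I_x.+1, (m < y)%N -> dual_unitary (U m)) ->
  mact (Lmat U) (@lvec C d x.+1 y) = (fun a => (d ^ 2)%:R * @lvec C d x.+1 y a).
Proof.
move=> hy hd; apply: functional_extensionality => b; rewrite /mact.
pose V := fun n (h : lab d) => if (n < y)%N then circ C h else cross C h.
pose G := fun n (h p q : lab d) => gate (U (inord n)) p (b (inord n)) h q.
transitivity (\sum_(c : wlab d x.+1) (\sum_(k : {ffun 'I_x.+2 -> lab d}) circ C (k ord0) *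
      (\prod_(m < x.+1) G m (c m) (k (widen_ord (leqnSn x.+1) m)) (k (lift ord0 m))) * cross C (k ord_max))
    * (\prod_(m < x.+1) V m (c m))).
  apply: eq_bigr => c _; rewrite /Lmat /lvec; congr (_ * _).
  apply: eq_bigr => k _; congr (_ * _ * _); apply: eq_bigr => m _.
  by rewrite /G /kprev /knext inord_val.
rewrite (assemble (y := y) (f := fun n => circ C (b (inord n))) (g := fun n => cross C (b (inord n)))) //.
- by rewrite sum_circ_cross lvecE // mulrC -mulnn.
- move=> m hm q; rewrite /V hm /G; apply: LRl; apply: hd.
  by rewrite inordK // (leq_trans hm hy).
- move=> m /andP [h1 h2] p; rewrite /V ltnNge h1 /G; apply: LRr.
  by case: (hu (inord m)).
Qed.

Lemma eigLL y : (y <= x.+1)%N -> (forall m : 'I_x.+1, (y <= m)%N -> dual_unitary (U m)) ->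
  ract (@lvec C d x.+1 y) (Lmat U) = (fun a => (d ^ 2)%:R * @lvec C d x.+1 y a).
Proof.
move=> hy hd; apply: functional_extensionality => c; rewrite /ract.
pose V := fun n (h : lab d) => if (n < y)%N then circ C h else cross C h.
pose G := fun n (h p q : lab d) => gate (U (inord n)) p h (c (inord n)) q.
transitivity (\sum_(b : wlab d x.+1) (\sum_(k : {ffun 'I_x.+2 -> lab d}) circ C (k ord0) *
      (\prod_(m < x.+1) G m (b m) (k (widen_ord (leqnSn x.+1) m)) (k (lift ord0 m))) * cross C (k ord_max))
    * (\prod_(m < x.+1) V m (b m))).
  apply: eq_bigr => b _; rewrite /Lmat /lvec mulrC; congr (_ * _).
  apply: eq_bigr => k _; congr (_ * _ * _); apply: eq_bigr => m _.
  by rewrite /G /kprev /knext inord_val.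
rewrite (assemble (y := y) (f := fun n => circ C (c (inord n))) (g := fun n => cross C (c (inord n)))) //.
- by rewrite sum_circ_cross lvecE // mulrC -mulnn.
- move=> m hm q; rewrite /V hm /G; apply: LLl.
  by case: (hu (inord m)).
- move=> m /andP [h1 h2] p; rewrite /V ltnNge h1 /G; apply: LLr; apply: hd.
  by rewrite inordK.
Qed.
End Eig.


Section Indep.
Variables (C : numClosedFieldType) (d x : nat).

Lemma indep_gen (F1 F2 : lab d -> C) (T Cn : lab d) :
  F1 T = 1 -> F2 T = 0 -> F1 Cn = 0 -> F2 Cn = 1 ->
  forall c : 'I_x.+1 -> C,
  (forall a : wlab d x, \sum_(y < x.+1) c y * \prod_(m < x) (if (m < y)%N then F1 (a m) else F2 (a m)) = 0) ->
  forall y, c y = 0.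
Proof.
move=> h1 h2 h3 h4 c H z.
set a := [ffun m : 'I_x => if (m < z)%N then T else Cn].
have Hz : \prod_(m < x) (if (m < z)%N then F1 (a m) else F2 (a m)) = 1.
  apply: big1 => m _; rewrite ffunE; case: ifP => hm; by rewrite ?hm.
have Hy : forall y : 'I_x.+1, y != z -> \prod_(m < x) (if (m < y)%N then F1 (a m) else F2 (a m)) = 0.
  move=> y hyz.
  case: (ltngtP y z) => hyz'.
  + have hyx : (y < x)%N by apply: (leq_trans hyz'); rewrite -ltnS ltn_ord.
    by rewrite (bigD1 (Ordinal hyx)) //= ltnn ffunE /= hyz' h2 mul0r.
  + have hzx : (z < x)%N by apply: (leq_trans hyz'); rewrite -ltnS ltn_ord.
    by rewrite (bigD1 (Ordinal hzx)) //= hyz' ffunE /= ltnn h3 mul0r.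
  + by move: hyz; rewrite -val_eqE /= hyz' eqxx.
have := H a; rewrite (bigD1 z) //= Hz mulr1 big1 ?addr0 // => y hy.
by rewrite Hy ?mulr0.
Qed.
End Indep.

Section Labels.
Variables (d : nat) (hd : (2 <= d)%N).
Definition zero : 'I_d := Ordinal (leq_trans (isT : 0 < 2)%N hd).
Definition one : 'I_d := Ordinal hd.
Definition lab_of (S : pred nat) : lab d := [ffun s : 'I_8 => if S s then one else zero].
Lemma z1 : (zero == one) = false. Proof. by []. Qed.
Lemma o1 : (one == zero) = false. Proof. by []. Qed.
End Labels.

Lemma tri1 (C : numClosedFieldType) d hd : @tri C d (lab_of hd (fun n => (n == 1) || (n == 2))%N) = 1.
Proof. by rewrite triE !ffunE /o8 !inordK //= !eqxx. Qed.
Lemma circ1 (C : numClosedFieldType) d hd : @circ C d (lab_of hd (fun n => (n == 1) || (n == 2))%N) = 0.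
Proof. by rewrite circE !ffunE /o8 !inordK //= !eqxx. Qed.
Lemma tri2 (C : numClosedFieldType) d hd : @tri C d (lab_of hd (fun n => (n == 2) || (n == 3))%N) = 0.
Proof. by rewrite triE !ffunE /o8 !inordK //= !eqxx. Qed.
Lemma circ2 (C : numClosedFieldType) d hd : @circ C d (lab_of hd (fun n => (n == 2) || (n == 3))%N) = 1.
Proof. by rewrite circE !ffunE /o8 !inordK //= !eqxx. Qed.
Lemma cross2 (C : numClosedFieldType) d hd : @cross C d (lab_of hd (fun n => (n == 2) || (n == 3))%N) = 0.
Proof. by rewrite crossE !ffunE /o8 !inordK //= !eqxx. Qed.
Lemma circ3 (C : numClosedFieldType) d hd : @circ C d (lab_of hd (fun n => (n == 1) || (n == 6))%N) = 0.
Proof. by rewrite circE !ffunE /o8 !inordK //= !eqxx. Qed.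
Lemma cross3 (C : numClosedFieldType) d hd : @cross C d (lab_of hd (fun n => (n == 1) || (n == 6))%N) = 1.
Proof. by rewrite crossE !ffunE /o8 !inordK //= !eqxx. Qed.

Theorem lemma2 (C : numClosedFieldType) (d x : nat) (hd : (2 <= d)%N) (hx : (1 <= x)%N)
  (U : 'I_x -> 'M[C]_(d * d)) (hU : forall m, unitary_mx (U m)) :
  let R := Rmat U in
  let L := Lmat U in
  let dd : C := (d ^ 2)%:R in
  ((forall m, dual_unitary (U m)) ->
     (forall y : 'I_x.+1,
        mact R (@rvec C d x y) = (fun a => dd * @rvec C d x y a) /\
        ract (@rvec C d x y) R = (fun a => dd * @rvec C d x y a) /\
        mact L (@lvec C d x y) = (fun a => dd * @lvec C d x y a) /\
        ract (@lvec C d x y) L = (fun a => dd * @lvec C d x y a)) /\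
     (forall c : 'I_x.+1 -> C,
        (forall a, \sum_(y < x.+1) c y * @rvec C d x y a = 0) -> forall y, c y = 0) /\
     (forall c : 'I_x.+1 -> C,
        (forall a, \sum_(y < x.+1) c y * @lvec C d x y a = 0) -> forall y, c y = 0)) /\
  (mact R (@rvec C d x 0) = (fun a => dd * @rvec C d x 0 a) /\
   mact L (@lvec C d x 0) = (fun a => dd * @lvec C d x 0 a) /\
   ract (@rvec C d x x) R = (fun a => dd * @rvec C d x x a) /\
   ract (@lvec C d x x) L = (fun a => dd * @lvec C d x x a)).
Proof.
have indR : forall x' (c : 'I_x'.+1 -> C),
    (forall a, \sum_(y < x'.+1) c y * @rvec C d x' y a = 0) -> forall y, c y = 0.
  by move=> x' c; apply: (indep_gen (tri1 C hd) (circ1 C hd) (tri2 C hd) (circ2 C hd)).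
have indL : forall x' (c : 'I_x'.+1 -> C),
    (forall a, \sum_(y < x'.+1) c y * @lvec C d x' y a = 0) -> forall y, c y = 0.
  by move=> x' c; apply: (indep_gen (circ2 C hd) (cross2 C hd) (circ3 C hd) (cross3 C hd)).
case: x hx U hU => [//|x] _ U hU R L dd.
split.
- move=> hD; split; [|split; [exact: indR|exact: indL]].
  move=> y; have hy : (y <= x.+1)%N by rewrite -ltnS ltn_ord.
  split; [|split; [|split]].
  + by apply: eigRR => // m _; apply: hD.
  + by apply: eigRL => // m _; apply: hD.
  + by apply: eigLR => // m _; apply: hD.
  + by apply: eigLL => // m _; apply: hD.
- split; [|split; [|split]].
  + by apply: eigRR => // m.
  + by apply: eigLR => // m.
  + by apply: eigRL => // m; rewrite leqNgt ltn_ord.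
  + by apply: eigLL => // m; rewrite leqNgt ltn_ord.
Qed.
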